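(* Fix an integer $p\ge 0$ and a subinterval $I_n=[t_n,t_{n+1}]$ of a partition of $[0,T]$, with initial value $u_n=u(t_n)$. Let $U_h=[u_h(t_{n,0}),\dots,u_h(t_{n,p})]^T$ be the nodal values of the DG approximation on $I_n$, i.e. the solution of $LU_h+\frac{\Delta t_n}{2}F(U_h)+B=0$. Consider the fixed-point iteration $$U^{k+1}=-\frac{\Delta t_n}{2}L^{-1}F(U^k)-L^{-1}B,\qquad k=0,1,\dots,$$ where $F$ is the exactly integrated nonlinear vector, and $U^0$ is the explicit-Euler initial iterate. Then for every $K\ge 0$, $$u_h(t_{n,m})-u^K_{n,m}=\mathcal{O}\left(h^{K+2}\right),\qquad m=0,\dots,p,$$ as $h=\max_n\Delta t_n\to 0$, where $U^K=[u^K_{n,0},\dots,u^K_{n,p}]^T$.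
   Context: Initial value problem: $u'(t)=f(t,u(t))$ for $t\in[0,T]$, $u(0)=u_0\in\mathbb{R}$, with $f:\mathbb{R}\times\mathbb{R}\to\mathbb{R}$ sufficiently smooth (of class $\mathcal{C}^{2p+1}$) and Lipschitz in $u$; $u$ denotes the exact solution. Partition $0=t_0<t_1<\dots<t_N=T$, $I_n=[t_n,t_{n+1}]$, $\Delta t_n=t_{n+1}-t_n$, $h=\max_n\Delta t_n$. On the reference interval $[-1,1]$ let $-1<\tau_0<\tau_1<\dots<\tau_p=1$ be the $p+1$ right Gauss–Radau points (including the right endpoint; the quadrature $\int_{-1}^1 g\approx\sum_j\omega_j g(\tau_j)$ with the corresponding weights $\omega_j$ is exact for polynomials of degree $\le 2p$), and $\ell_0,\dots,\ell_p$ the Lagrange polynomials of degree $p$ with $\ell_i(\tau_j)=\delta_{ij}$. Nodes on $I_n$: $t_{n,m}=t_n+\frac{(\tau_m+1)\Delta t_n}{2}$, so $t_{n,p}=t_{n+1}$. Define the $(p+1)\times(p+1)$ matrix $L_{i,j}=\int_{-1}^1\ell_i'(\tau)\ell_j(\tau)\,d\tau-\delta_{ip}\delta_{jp}$ (invertible), the vector $B=u_n[\ell_0(-1),\dots,\ell_p(-1)]^T$, and for $U=[u_{n,0},\dots,u_{n,p}]^T$ the vectors $F(U)_j=\int_{-1}^1 f\big(t_n+\tfrac{(\tau+1)\Delta t_n}{2},\sum_{m=0}^p u_{n,m}\ell_m(\tau)\big)\ell_j(\tau)\,d\tau$ and $F_\omega(U)_j=\omega_j f(t_{n,j},u_{n,j})$,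 $j=0,\dots,p$. The DG approximation $u_h$ on $I_n$ is the degree-$p$ polynomial $u_h(t)=\sum_m u_h(t_{n,m})\ell_m(\tau)$ ($t=t_n+\frac{(\tau+1)\Delta t_n}{2}$) whose nodal vector $U_h$ solves $LU_h+\frac{\Delta t_n}{2}F(U_h)+B=0$ (exists uniquely for $h$ small); the DG step value is $u_{n+1}=u_h(t_{n,p})$. The explicit-Euler initial iterate is $u^0_{n,0}=u_n+(t_{n,0}-t_n)f(t_n,u_n)$, $u^0_{n,m+1}=u^0_{n,m}+(t_{n,m+1}-t_{n,m})f(t_{n,m},u^0_{n,m})$; the implicit-Euler initial iterate is $u^0_{n,0}=u_n+(t_{n,0}-t_n)f(t_{n,0},u^0_{n,0})$, $u^0_{n,m+1}=u^0_{n,m}+(t_{n,m+1}-t_{n,m})f(t_{n,m+1},u^0_{n,m+1})$. All $\mathcal{O}(\cdot)$ constants are independent of $n$ and $h$. *)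

(* Defs.v *)
From Stdlib Require Import Reals Lra Classical ClassicalEpsilon.
Open Scope R_scope.

(* Derivative of a real function at a point (0 if not differentiable). *)
Definition Deriv (g : R -> R) (x : R) : R :=
  match excluded_middle_informative (exists l, derivable_pt_lim g x l) with
  | left H => proj1_sig (constructive_indefinite_description _ H)
  | right _ => 0
  end.

(* Riemann integral of g over [a,b] (0 if not Riemann integrable). *)
Definition RInt (g : R -> R) (a b : R) : R :=
  match excluded_middle_informative (exists pr : Riemann_integrable g a b, True) with
  | left H => RiemannInt (proj1_sig (constructive_indefinite_description _ H))
  | right _ => 0
  end.

Fixpoint prodR (n : nat) (g : nat -> R) : R :=
  match n with
  | O => 1
  | S k => prodR k g * g k
  end.

Definition poly_deg_le (d : nat) (g : R -> R) : Prop :=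
  exists c : nat -> R, forall x, g x = sum_f_R0 (fun i => c i * x ^ i) d.

Definition continuous2 (g : R -> R -> R) : Prop :=
  forall t x eps, 0 < eps -> exists d, 0 < d /\
    forall s y, Rabs (s - t) < d -> Rabs (y - x) < d -> Rabs (g s y - g t x) < eps.

(* f : R x R -> R is of class C^k: there is a family D i j of partial
   derivatives (d/dt)^i (d/du)^j f, all continuous for i + j <= k. *)
Definition C_k2 (k : nat) (f : R -> R -> R) : Prop :=
  exists D : nat -> nat -> R -> R -> R,
    D O O = f /\
    (forall i j, (i + j <= k)%nat -> continuous2 (D i j)) /\
    (forall i j, (i + j < k)%nat -> forall t x,
        derivable_pt_lim (fun s => D i j s x) t (D (S i) j t x) /\
        derivable_pt_lim (fun y => D i j t y) x (D i (S j) t x)).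

Definition lipschitz_in_u (f : R -> R -> R) : Prop :=
  exists Lf, 0 <= Lf /\ forall t x y, Rabs (f t x - f t y) <= Lf * Rabs (x - y).

Definition right_gauss_radau (p : nat) (tau w : nat -> R) : Prop :=
  -1 < tau O /\ (forall m, (m < p)%nat -> tau m < tau (S m)) /\ tau p = 1 /\
  forall g, poly_deg_le (2 * p) g ->
    sum_f_R0 (fun j => w j * g (tau j)) p = RInt g (-1) 1.

Definition lagr (p : nat) (tau : nat -> R) (i : nat) (x : R) : R :=
  prodR (S p) (fun j => if Nat.eq_dec j i then 1 else (x - tau j) / (tau i - tau j)).

Definition Lmat (p : nat) (tau : nat -> R) (i j : nat) : R :=
  RInt (fun x => Deriv (lagr p tau i) x * lagr p tau j x) (-1) 1
  - (if Nat.eq_dec i p then if Nat.eq_dec j p then 1 else 0 else 0).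

Definition Lmul (p : nat) (tau : nat -> R) (U : nat -> R) (i : nat) : R :=
  sum_f_R0 (fun j => Lmat p tau i j * U j) p.

Definition Bvec (p : nat) (tau : nat -> R) (un : R) (i : nat) : R :=
  un * lagr p tau i (-1).

Definition Fvec (p : nat) (tau : nat -> R) (f : R -> R -> R) (tn dt : R)
    (U : nat -> R) (j : nat) : R :=
  RInt (fun x => f (tn + (x + 1) * dt / 2)
                   (sum_f_R0 (fun m => U m * lagr p tau m x) p)
                 * lagr p tau j x) (-1) 1.

Definition node (tau : nat -> R) (tn dt : R) (m : nat) : R :=
  tn + (tau m + 1) * dt / 2.

Fixpoint euler0 (tau : nat -> R) (f : R -> R -> R) (tn dt un : R) (m : nat) : R :=
  match m with
  | O => un + (node tau tn dt O - tn) * f tn un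
  | S k => euler0 tau f tn dt un k
           + (node tau tn dt (S k) - node tau tn dt k)
             * f (node tau tn dt k) (euler0 tau f tn dt un k)
  end.

Definition dg_system (p : nat) (tau : nat -> R) (f : R -> R -> R) (tn dt un : R)
    (U : nat -> R) : Prop :=
  forall i, (i <= p)%nat ->
    Lmul p tau U i + dt / 2 * Fvec p tau f tn dt U i + Bvec p tau un i = 0.

(* Fixed-point iteration U^{k+1} = -dt/2 L^{-1} F(U^k) - L^{-1} B, written
   equivalently (L invertible) as L U^{k+1} = -dt/2 F(U^k) - B,
   started from the explicit-Euler iterate. *)
Definition fp_iteration (p : nat) (tau : nat -> R) (f : R -> R -> R) (tn dt un : R)
    (Useq : nat -> nat -> R) : Prop :=
  (forall m, (m <= p)%nat -> Useq O m = euler0 tau f tn dt un m) /\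
  (forall k i, (i <= p)%nat ->
     Lmul p tau (Useq (S k)) i = - (dt / 2) * Fvec p tau f tn dt (Useq k) i
                                 - Bvec p tau un i).

(* Main.v *)
Require Import Defs.
From Stdlib Require Import Reals Lra Lia FunctionalExtensionality Classical ClassicalEpsilon.
From Coquelicot Require Import Coquelicot.
Open Scope R_scope.

Lemma Deriv_eq g x l : derivable_pt_lim g x l -> Deriv g x = l.
Proof.
intro H. unfold Deriv.
destruct excluded_middle_informative as [e|n].
- destruct (constructive_indefinite_description _ e) as [l' Hl']. simpl.
  exact (uniqueness_limite _ _ _ _ Hl' H).
- exfalso; apply n; exists l; exact H.
Qed.

Lemma DRInt_eq g a b : ex_RInt g a b -> Defs.RInt g a b = RInt g a b.
Proof.
intro H. unfold Defs.RInt.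
destruct excluded_middle_informative as [e|n].
- destruct (constructive_indefinite_description _ e) as [pr Hpr]. simpl.
  symmetry; apply RInt_Reals.
- exfalso; apply n; exists (ex_RInt_Reals_0 _ _ _ H); exact I.
Qed.

Lemma RInt_zero_pos (g : R -> R) a b :
  a < b -> (forall x, continuous g x) -> (forall x, a < x < b -> 0 <= g x) ->
  RInt g a b = 0 -> forall x, a < x < b -> g x = 0.
Proof.
intros ab Hc Hp H0 x0 Hx0.
destruct (Req_dec (g x0) 0) as [e|ne]; [exact e|exfalso].
assert (gp : 0 < g x0) by (destruct (Hp x0 Hx0); lra).
assert (Hcp : continuity_pt g x0) by (apply continuity_pt_filterlim; apply Hc).
destruct (Hcp (g x0 / 2)) as [d [dp Hd]]; [lra|].
set (a' := Rmax a (x0 - d/2)). set (b' := Rmin b (x0 + d/2)).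
assert (a'1 : a <= a') by apply Rmax_l.
assert (a'2 : a' < x0) by (unfold a'; apply Rmax_lub_lt; lra).
assert (b'1 : b' <= b) by apply Rmin_l.
assert (b'2 : x0 < b') by (unfold b'; apply Rmin_glb_lt; lra).
assert (a'3 : x0 - d/2 <= a') by apply Rmax_r.
assert (b'3 : b' <= x0 + d/2) by apply Rmin_r.
assert (ex : forall u v, ex_RInt g u v) by (intros; apply (@ex_RInt_continuous R_CompleteNormedModule); intros; apply Hc).
assert (I1 : 0 <= RInt g a a') by (apply RInt_ge_0; auto; intros; apply Hp; lra).
assert (I3 : 0 <= RInt g b' b) by (apply RInt_ge_0; auto; intros; apply Hp; lra).
assert (I2 : RInt (fun _ => g x0 / 2) a' b' < RInt g a' b').
{ apply RInt_lt; [lra | intros; apply Hc | intros; apply continuous_const | ].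
  intros x Hx. assert (Hd' : Rabs (g x - g x0) < g x0 / 2).
  { destruct (Req_dec x x0) as [->|nx]. rewrite Rminus_eq_0, Rabs_R0; lra.
    apply (Hd x). split. split; [exact I| auto]. simpl. unfold R_dist. apply Rabs_def1; lra. }
  apply Rabs_def2 in Hd'. lra. }
rewrite RInt_const in I2. unfold scal in I2; simpl in I2; unfold mult in I2; simpl in I2.
assert (0 < (b' - a') * (g x0 / 2)) by (apply Rmult_lt_0_compat; lra).
rewrite <- (RInt_Chasles g a a' b) in H0 by auto.
rewrite <- (RInt_Chasles g a' b' b) in H0 by auto.
unfold plus in H0; simpl in H0. lra.
Qed.

Module MC.
From mathcomp Require Import all_boot all_algebra.
From mathcomp Require Import Rstruct.
Import GRing.Theory Num.Theory.

Lemma sum_f_big g n : sum_f_R0 g n = (\sum_(i < n.+1) g i)%R.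
Proof.
elim: n => [|n IH]; first by rewrite big_ord_recr big_ord0 /= add0r.
by rewrite big_ord_recr /= -IH.
Qed.

Lemma horner_is_derive (P : {poly R}) x : is_derive (fun y => (P.[y])%R) x (P^`().[x])%R.
Proof.
elim/poly_ind: P => [|P c IH].
  rewrite deriv0 horner0.
  apply: (is_derive_ext (fun _ => 0)); first by move=> t; rewrite horner0.
  apply: is_derive_const.
rewrite derivMXaddC.
apply: (is_derive_ext (fun y => (P.[y])%R * y + c)); first by move=> t; rewrite hornerMXaddC.
have -> : ((P + P^`() * 'X).[x])%R = (P^`().[x])%R * x + (P.[x])%R * 1 + 0.
  rewrite hornerD hornerMX /=. rewrite Rmult_1_r Rplus_0_r. by rewrite RplusE RmultE addrC.
apply: is_derive_plus; last by apply: is_derive_const.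
apply: (is_derive_mult (fun y => (P.[y])%R) (fun y => y)) => //.
  by apply: is_derive_id.
by move=> a b; rewrite /mult /=; apply: Rmult_comm.
Qed.

Lemma horner_dpl (P : {poly R}) x : derivable_pt_lim (fun y => (P.[y])%R) x (P^`().[x])%R.
Proof. by apply/is_derive_Reals/horner_is_derive. Qed.

Lemma horner_cont (P : {poly R}) x : continuous (fun y => (P.[y])%R) x.
Proof. apply: ex_derive_continuous; eexists; apply: horner_is_derive. Qed.

Lemma horner_ex_RInt (P : {poly R}) a b : ex_RInt (fun y => (P.[y])%R) a b.
Proof. apply: ex_RInt_continuous => z _; apply: horner_cont. Qed.

Lemma horner_FTC (P : {poly R}) a b :
  RInt (fun y => (P^`().[y])%R) a b = (P.[b])%R - (P.[a])%R.
Proof.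
apply: is_RInt_unique.
apply: (is_RInt_derive (fun y => (P.[y])%R)) => x _.
  by apply: horner_is_derive.
by apply: horner_cont.
Qed.

Lemma RInt_big n (g : nat -> R -> R) a b :
  (forall j, ex_RInt (g j) a b) ->
  RInt (fun x => \sum_(j < n) g j x)%R a b = (\sum_(j < n) RInt (g j) a b)%R.
Proof.
move=> H; elim: n => [|n IH].
  rewrite big_ord0 (RInt_ext _ (fun _ => 0)); last by move=> x _; rewrite big_ord0.
  by rewrite RInt_const /scal /= /mult /= Rmult_0_r.
have exS : forall m, ex_RInt (fun x => (\sum_(i < m) g i x)%R) a b.
  elim=> [|m IH2].
    apply: (ex_RInt_ext (fun _ => 0)); first by move=> x _; rewrite big_ord0.
    apply: ex_RInt_const.
  apply: (ex_RInt_ext (fun x => plus (\sum_(i < m) g i x)%R (g m x))).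
    by move=> x _; rewrite big_ord_recr.
  by apply: ex_RInt_plus.
rewrite big_ord_recr /= -IH.
rewrite (RInt_ext _ (fun x => plus ((fun x => \sum_(i < n) g i x)%R x) (g n x))); last first.
  by move=> x _; rewrite big_ord_recr.
by rewrite RInt_plus.
Qed.


Section Lag.
Variable p : nat.
Variable tau : nat -> R.
Hypothesis Hinj : forall i j, (i <= p)%N -> (j <= p)%N -> tau i = tau j -> i = j.

Definition lagF (i j : nat) : {poly R} :=
  if (j == i)%N then 1%R else (('X - (tau j)%:P) * ((tau i - tau j)^-1)%:P)%R.

Definition lagP (i : nat) : {poly R} := (\prod_(j < p.+1) lagF i j)%R.

Lemma prodR_big n g : prodR n g = (\prod_(j < n) g j)%R.
Proof.
elim: n => [|n IH]; first by rewrite big_ord0.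
by rewrite big_ord_recr /= IH.
Qed.

Lemma lagr_horner i x : lagr p tau i x = ((lagP i).[x])%R.
Proof.
rewrite /lagr prodR_big /lagP horner_prod.
apply: eq_bigr => j _; rewrite /lagF.
case: Nat.eq_dec => [->|ne]; first by rewrite eqxx hornerE.
have -> : (nat_of_ord j == i) = false by apply/eqP.
by rewrite !hornerE.
Qed.

Lemma lagr_fun i : lagr p tau i = (fun x => ((lagP i).[x])%R).
Proof. by apply: functional_extensionality => x; apply: lagr_horner. Qed.

Lemma size_lagF i j : (size (lagF i j) <= 2)%N.
Proof.
rewrite /lagF; case: eqP => _; first by rewrite size_poly1.
apply: (leq_trans (size_polyMleq _ _)).
rewrite size_XsubC. have := size_polyC_leq1 (tau i - tau j)^-1. by case: (size _) => [|[|]].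
Qed.

Lemma size_lagP i : (i <= p)%N -> (size (lagP i) <= p.+1)%N.
Proof.
move=> ip; rewrite /lagP.
suff H : forall n, (size (\prod_(j < n) lagF i j)%R <= if (i < n)%N then n else n.+1)%N.
  by apply: (leq_trans (H p.+1)); rewrite ltnS ip.
elim => [|n IH]; first by rewrite big_ord0 size_poly1.
rewrite big_ord_recr /=.
case: (eqVneq n i) => [ni|ni].
  rewrite /lagF ni eqxx mulr1. rewrite ni ltnn in IH. by rewrite ltnS leqnn.
apply: (leq_trans (size_polyMleq _ _)).
have h := leq_add IH (size_lagF i n).
rewrite -subn1. apply: (leq_trans (leq_sub2r 1 h)).
have -> : (i < n.+1)%N = (i < n)%N.
  by rewrite ltnS leq_eqVlt eq_sym (negbTE ni).
by case: ifP => _; rewrite addn2 subn1.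
Qed.

Lemma lagP_delta i j : (i <= p)%N -> (j <= p)%N ->
  ((lagP i).[tau j])%R = if (i == j)%N then 1%R else 0%R.
Proof.
move=> ip jp; rewrite /lagP horner_prod.
case: eqP => [<-|ne].
  apply: big1 => k _; rewrite /lagF.
  case: eqP => [_|nk]; first by rewrite hornerE.
  rewrite !hornerE mulfV //.
  apply/eqP => /subr0_eq H. apply: nk. apply: Hinj => //. by rewrite -ltnS.
rewrite (bigD1 (Ordinal (jp : (j < p.+1)%N))) //=.
rewrite /lagF. have -> : (j == i) = false by apply/eqP => H; apply: ne.
by rewrite !hornerE subrr mul0r mul0r.
Qed.

Lemma size_sum_le n (F : 'I_n -> {poly R}) m :
  (forall k, size (F k) <= m)%N -> (size (\sum_(k < n) F k)%R <= m)%N.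
Proof.
move=> H. apply: (big_ind (fun q : {poly R} => size q <= m)%N) => //.
  by rewrite size_poly0.
move=> x y hx hy; apply: (leq_trans (size_polyD _ _)). by rewrite geq_max hx hy.
Qed.

Lemma interp (P : {poly R}) : (size P <= p.+1)%N ->
  P = (\sum_(i < p.+1) (P.[tau i]) *: lagP i)%R.
Proof.
move=> sP. apply/eqP; rewrite -subr_eq0; apply/eqP.
set D := (P - _)%R.
have rootD : forall j, (j <= p)%N -> (D.[tau j] = 0)%R.
  move=> j jp. rewrite /D hornerD hornerN horner_sum.
  rewrite (bigD1 (Ordinal (jp : (j < p.+1)%N))) //=.
  rewrite hornerZ lagP_delta // eqxx mulr1 big1 ?addr0 ?subrr //.
  move=> k /eqP nk; rewrite hornerZ lagP_delta //; last by rewrite -ltnS.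
  case: eqP => [kj|]; last by rewrite mulr0.
  by exfalso; apply: nk; apply: val_inj.
apply/eqP; apply: contraT => nD.
have := max_poly_roots nD (rs := [seq tau i | i <- iota 0 p.+1]).
rewrite size_map size_iota.
have -> : all (root D) [seq tau i | i <- iota 0 p.+1].
  apply/allP => x /mapP [j]; rewrite mem_iota add0n => /andP [_ jp] ->.
  by apply/rootP; apply: rootD; rewrite -ltnS.
have -> : uniq [seq tau i | i <- iota 0 p.+1].
  rewrite map_inj_in_uniq ?iota_uniq //.
  move=> a b; rewrite !mem_iota !add0n => /andP [_ ha] /andP [_ hb].
  by apply: Hinj; rewrite -ltnS.
move=> /(_ isT isT) H.
have : (size D <= p.+1)%N.
  rewrite /D; apply: (leq_trans (size_polyD _ _)); rewrite geq_max sP size_polyN.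
  apply: size_sum_le => k; apply: (leq_trans (size_scale_leq _ _)); apply: size_lagP; exact: (ltn_ord k).
by move=> /leq_ltn_trans /(_ H); rewrite ltnn.
Qed.

End Lag.

End MC.

Module MC2.
From mathcomp Require Import all_boot all_algebra.
From mathcomp Require Import Rstruct.
Import GRing.Theory Num.Theory.
Import MC.

Definition PI (P : {poly R}) := RInt (fun x => (P.[x])%R) (-1) 1.

Lemma PI_add P Q : PI (P + Q)%R = PI P + PI Q.
Proof.
rewrite /PI (RInt_ext _ (fun x => plus (P.[x])%R (Q.[x])%R)); last by move=> x _; rewrite hornerD.
by rewrite RInt_plus //; apply: horner_ex_RInt.
Qed.

Lemma PI_scale c P : PI (c *: P)%R = c * PI P.
Proof.
rewrite /PI (RInt_ext _ (fun x => scal c (P.[x])%R)); last by move=> x _; rewrite hornerZ.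
by rewrite RInt_scal //; apply: horner_ex_RInt.
Qed.

Lemma PI_sum n (F : 'I_n -> {poly R}) : PI (\sum_(k < n) F k)%R = (\sum_(k < n) PI (F k))%R.
Proof.
elim: n F => [|n IH] F.
  rewrite !big_ord0 /PI (RInt_ext _ (fun _ => 0)); last by move=> x _; rewrite horner0.
  by rewrite RInt_const /scal /= /mult /= Rmult_0_r.
by rewrite big_ord_recr PI_add IH big_ord_recr.
Qed.

Lemma PI_deriv P : PI (P^`()) = (P.[1])%R - (P.[-1])%R.
Proof. by rewrite /PI horner_FTC. Qed.


Section Inj.
Variable p : nat.
Variable tau : nat -> R.
Hypothesis Hinj : forall i j, (i <= p)%N -> (j <= p)%N -> tau i = tau j -> i = j.

Definition QV (V : nat -> R) : {poly R} := (\sum_(m < p.+1) V m *: lagP p tau m)%R.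

Lemma QV_tau V j : (j <= p)%N -> ((QV V).[tau j])%R = V j.
Proof.
move=> jp; rewrite /QV horner_sum.
rewrite (bigD1 (Ordinal (jp : (j < p.+1)%N))) //=.
rewrite hornerZ lagP_delta // eqxx mulr1 big1 ?addr0 //.
move=> k /eqP nk; rewrite hornerZ lagP_delta //; last exact: (ltn_ord k).
case: eqP => [kj|]; last by rewrite mulr0.
by exfalso; apply: nk; apply: val_inj.
Qed.

Lemma Lmat_PI i j : Lmat p tau i j =
  PI ((lagP p tau i)^`() * lagP p tau j)%R - (if Nat.eq_dec i p then if Nat.eq_dec j p then 1 else 0 else 0).
Proof.
rewrite /Lmat; congr (_ - _); last by case: Nat.eq_dec; case: Nat.eq_dec.
rewrite !lagr_fun.
rewrite (_ : (fun x => Deriv (fun x0 => ((lagP p tau i).[x0])%R) x * ((lagP p tau j).[x])%R) =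
   (fun x => (((lagP p tau i)^`() * lagP p tau j).[x])%R)); last first.
  apply: functional_extensionality => x. rewrite hornerM (Deriv_eq _ _ _ (horner_dpl _ _)). by [].
by rewrite DRInt_eq //; apply: horner_ex_RInt.
Qed.

Lemma Lmul_PI V i : (i <= p)%N ->
  Lmul p tau V i = PI ((lagP p tau i)^`() * QV V)%R - (if (i == p)%N then V p else 0).
Proof.
move=> ip; rewrite /Lmul sum_f_big.
under eq_bigr do rewrite Lmat_PI.
rewrite /QV mulr_sumr PI_sum.
under eq_bigr => j _ do rewrite RmultE RminusE mulrBl.
rewrite sumrB RminusE; congr (_ - _).
  apply: eq_bigr => j _; by rewrite -scalerAr PI_scale RmultE mulrC.
case: (eqVneq i p) => [->|nip].
  rewrite (bigD1 ord_max) //= big1 ?addr0.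
    by destruct (Nat.eq_dec p p) as [e|ne] => //=; rewrite mul1r.
  move=> k nk; destruct (Nat.eq_dec p p) as [e|ne] => //=.
  destruct (Nat.eq_dec k p) as [kp|nkp] => /=; last by rewrite mul0r.
  by exfalso; move: nk; rewrite -val_eqE /= kp eqxx.
apply: big1 => k _. destruct (Nat.eq_dec i p) as [ip'|] => /=; last by rewrite mul0r.
by rewrite ip' eqxx in nip.
Qed.

End Inj.


Lemma deriv_sumo n (F : 'I_n -> {poly R}) : ((\sum_(k < n) F k)^`() = \sum_(k < n) (F k)^`())%R.
Proof.
elim: n F => [|n IH] F; first by rewrite !big_ord0 deriv0.
by rewrite !big_ord_recr derivD IH.
Qed.

Section Inj2.
Variable p : nat.
Variable tau : nat -> R.
Hypothesis Hinj : forall i j, (i <= p)%N -> (j <= p)%N -> tau i = tau j -> i = j.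
Hypothesis Htp : tau p = 1.
Hypothesis Hrng : forall m, (m <= p)%N -> -1 < tau m <= 1.

Lemma G_formula (phi : {poly R}) V : (size phi <= p.+1)%N ->
  (\sum_(i < p.+1) (phi.[tau i])%R * Lmul p tau V i)%R =
  PI (phi^`() * QV p tau V)%R - (phi.[1])%R * V p.
Proof.
move=> sphi.
rewrite {2}(@interp p tau Hinj phi sphi) deriv_sumo mulr_suml PI_sum.
under eq_bigr => i _ do rewrite (Lmul_PI p tau V i (ltn_ord i : (i <= p)%N)) RminusE mulrBr.
rewrite sumrB RminusE; congr (_ - _).
  by apply: eq_bigr => i _; rewrite derivZ -scalerAl PI_scale.
rewrite (bigD1 ord_max) //= big1 ?addr0 ?eqxx ?Htp //.
move=> k nk; have -> : (nat_of_ord k == p) = false.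
  by apply/negbTE; move: nk; rewrite -val_eqE.
by rewrite mulr0.
Qed.


Lemma L_inj V : (forall i, (i <= p)%N -> Lmul p tau V i = 0) ->
  forall m, (m <= p)%N -> V m = 0.
Proof.
move=> HL.
have H0 : forall phi : {poly R}, (size phi <= p.+1)%N ->
    PI (phi^`() * QV p tau V)%R = (phi.[1])%R * V p.
  move=> phi sphi; have := G_formula phi V sphi.
  rewrite big1; last by move=> i _; rewrite HL ?mulr0 //; exact: (ltn_ord i).
  move=> h; symmetry in h; move: h; rewrite RminusE => /eqP; rewrite subr_eq0 => /eqP ->.
  by [].
set Q := QV p tau V.
have HQ1 : (Q.[1])%R = V p.
  have -> : (Q.[1])%R = (Q.[tau p])%R by rewrite Htp.
  by rewrite /Q QV_tau.
have sQ : (size Q <= p.+1)%N.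
  apply: size_sum_le => k; apply: (leq_trans (size_scale_leq _ _)); apply: size_lagP; exact: (ltn_ord k).
have sQ' : (size (Q^`())%R <= p)%N.
  case: (eqVneq Q 0%R) => [->|nQ]; first by rewrite deriv0 size_poly0.
  by rewrite -ltnS; apply: (leq_trans (lt_size_deriv nQ)).
set phi := (('X + 1%:P) * Q^`())%R.
have sphi : (size phi <= p.+1)%N.
  apply: (leq_trans (size_polyMleq _ _)). by rewrite size_XaddC.
have Hphim1 : (phi.[-1])%R = 0 by rewrite /phi hornerM hornerD hornerX hornerC addrC subrr mul0r.
have IBP : PI (phi * Q^`())%R = 0.
  have := PI_deriv (phi * Q)%R. rewrite derivM PI_add H0 // !(hornerM phi Q) Hphim1 HQ1 mul0r.
  rewrite Rminus_0_r => h.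
  by apply: (addrI ((phi.[1])%R * V p)); rewrite addr0; exact: h.
have HQ'0 : forall x, -1 < x < 1 -> ((Q^`()).[x])%R = 0.
  move=> x Hx.
  have := RInt_zero_pos (fun y => ((phi * Q^`()).[y])%R) (-1) 1.
  move=> /(_ ltac:(lra) (fun y => horner_cont _ y)).
  have hg : forall y, ((phi * Q^`()).[y])%R = (y + 1) * (((Q^`()).[y])%R * ((Q^`()).[y])%R).
    move=> y; rewrite /phi !hornerM hornerD hornerX hornerC. by rewrite !RmultE mulrA.
  have pos : forall y, -1 < y < 1 -> 0 <= ((phi * Q^`()).[y])%R.
    move=> y Hy; rewrite hg. apply: Rmult_le_pos; first lra. apply: Rle_0_sqr.
  move=> /(_ pos IBP x Hx); rewrite hg => /Rmult_integral [|]; first lra.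
  by move=> /Rmult_integral [].
have HVp : V p = 0.
  have := H0 1%R; rewrite size_poly1 => /(_ isT).
  rewrite -polyC1 derivC mul0r hornerC.
  have -> : PI 0%R = 0.
    rewrite /PI (RInt_ext _ (fun _ => 0)); last by move=> x _; rewrite horner0.
    by rewrite RInt_const /scal /= /mult /= Rmult_0_r.
  by move=> h; rewrite h Rmult_1_l.
move=> m mp.
rewrite -(@QV_tau p tau Hinj V m mp) -/Q.
have := horner_FTC Q (tau m) 1.
rewrite (RInt_ext _ (fun _ => 0)); last first.
  move=> x; rewrite Rmin_left ?Rmax_right; try (have := Hrng m mp; lra).
  move=> Hx; apply: HQ'0; have := Hrng m mp; lra.
rewrite RInt_const /scal /= /mult /= Rmult_0_r.
have -> : ((Q.[1])%R : R) = V p by [].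
rewrite HVp. move=> h. lra.
Qed.



Lemma lagr_delta1 i : (i <= p)%N -> ((lagP p tau i).[1])%R = if (i == p)%N then 1 else 0.
Proof.
move=> ip; have -> : ((lagP p tau i).[1])%R = ((lagP p tau i).[tau p])%R by rewrite Htp.
by rewrite lagP_delta.
Qed.

Lemma sum1 x : sum_f_R0 (fun m => lagr p tau m x) p = 1.
Proof.
rewrite sum_f_big.
have e := @interp p tau Hinj 1%R; rewrite size_poly1 in e.
transitivity (((1 : {poly R}).[x])%R); last by rewrite hornerE.
rewrite {1}(e isT) horner_sum. apply: eq_bigr => i _.
by rewrite hornerZ hornerE mul1r lagr_horner.
Qed.

Lemma QV_const c : QV p tau (fun _ => c) = (c%:P)%R.
Proof.
have := @interp p tau Hinj (c%:P)%R.
rewrite (leq_trans (size_polyC_leq1 c)) // => /(_ isT) ->.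
by apply: eq_bigr => i _; rewrite hornerC.
Qed.

Lemma QV_lin c : (0 < p)%N -> QV p tau (fun m => c * (tau m + 1)) = (c *: ('X + 1%:P))%R.
Proof.
move=> p0.
have := @interp p tau Hinj (c *: ('X + 1%:P))%R.
have sz : (size (c *: ('X + 1%:P))%R <= p.+1)%N.
  by apply: (leq_trans (size_scale_leq _ _)); rewrite size_XaddC.
move=> /(_ sz) ->. apply: eq_bigr => i _.
by rewrite hornerZ hornerD hornerX hornerC.
Qed.

Lemma hm1 (P : {poly R}) : (P.[-1])%R = horner P (IZR (Zneg xH)).
Proof. by []. Qed.

Lemma PI_lagr i : Defs.RInt (lagr p tau i) (-1) 1 = PI (lagP p tau i).
Proof. by rewrite lagr_fun DRInt_eq //; apply: horner_ex_RInt. Qed.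

Lemma Lmul_const c i : (i <= p)%N -> Lmul p tau (fun _ => c) i = - c * lagr p tau i (-1).
Proof.
move=> ip; rewrite Lmul_PI // QV_const.
rewrite mulrC mul_polyC PI_scale PI_deriv lagr_delta1 // lagr_horner.
rewrite hm1; case: eqP => _; lra.
Qed.

Lemma Lmul_lin c i : (i <= p)%N ->
  Lmul p tau (fun m => c * (tau m + 1)) i = - c * Defs.RInt (lagr p tau i) (-1) 1.
Proof.
move=> ip; rewrite PI_lagr Lmul_PI //.
case: (posnP p) => [p0|pp].
  move: ip; rewrite p0 leqn0 => /eqP ->.
  rewrite /lagP big_ord1 /lagF eqxx -polyC1 derivC mul0r.
  have t0 : tau 0 = 1 by rewrite -p0.
  have PIC : forall a, PI ((a%:P)%R) = 2 * a.
    move=> a; rewrite /PI (RInt_ext _ (fun _ => a)); last by move=> x _; rewrite hornerC.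
    rewrite RInt_const /scal /= /mult /=; ring.
  rewrite (_ : PI (0 : {poly R}) = 0); last by rewrite -polyC0 PIC Rmult_0_r.
  rewrite (_ : PI ((1 : R)%:P)%R = 2); last by rewrite PIC Rmult_1_r.
  rewrite t0; ring.
rewrite QV_lin // -scalerAr PI_scale.
have IBP := PI_deriv (lagP p tau i * ('X + 1%:P))%R.
rewrite derivM PI_add !hornerM !hornerD !hornerX !hornerC lagr_delta1 // in IBP.
rewrite derivD derivX -polyC1 derivC addr0 mulr1 addNr mulr0 in IBP.
have tp2 : c * (tau p + 1) = 2 * c by rewrite Htp; ring.
set A := PI ((lagP p tau i)^`() * ('X + 1%:P))%R in IBP *.
move: IBP; case: eqP => _; rewrite ?mul1r ?mul0r => IBP.
  rewrite tp2. rewrite -?RplusE -?R1E -?R0E in IBP.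
  have eA : A = 2 - PI (lagP p tau i) by lra.
  rewrite eA; ring.
rewrite -?R0E in IBP.
have eA : A = - PI (lagP p tau i) by lra.
rewrite eA; ring.
Qed.

End Inj2.


Section MatSec.
Local Open Scope ring_scope.
Lemma inv_repr n (M : nat -> nat -> R) :
  (forall V : nat -> R, (forall i, (i <= n)%N -> sum_f_R0 (fun j => M i j * V j) n = 0) ->
     forall j, (j <= n)%N -> V j = 0) ->
  exists B : nat -> nat -> R, forall V j, (j <= n)%N ->
    V j = sum_f_R0 (fun i => B j i * sum_f_R0 (fun k => M i k * V k) n) n.
Proof.
move=> Hinj.
set A : 'M[R]_(n.+1) := \matrix_(i, j) M i j.
have uA : A \in unitmx.
  rewrite -unitmx_tr -row_free_unit; apply: inj_row_free => w hw.
  have H := Hinj (fun j => w ord0 (inord j)).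
  apply/matrixP => a b; rewrite mxE (ord1 a).
  have -> : b = inord (nat_of_ord b) by rewrite inord_val.
  apply: H; last by rewrite -ltnS.
  move=> i ip; rewrite sum_f_big.
  have e := congr1 (fun m : 'M[R]_(1, n.+1) => m ord0 (inord i)) hw; rewrite !mxE in e; apply: (etrans _ e).
  apply: eq_bigr => k _; rewrite !mxE inord_val inordK //.
  by rewrite mulrC.
exists (fun j i => invmx A (inord j) (inord i)) => V j jn.
set v : 'cV[R]_(n.+1) := \col_k V (nat_of_ord k).
have := congr1 (fun m : 'cV[R]_(n.+1) => m (inord j) ord0) (mulKmx uA v).
rewrite /= !mxE inordK // => <-.
rewrite sum_f_big; apply: eq_bigr => i _; rewrite !mxE inord_val sum_f_big.
congr (_ * _); apply: eq_bigr => k _; rewrite !mxE.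
by [].
Qed.
End MatSec.

End MC2.

Lemma lagr_cont p tau i x : continuity_pt (lagr p tau i) x.
Proof.
apply continuity_pt_filterlim.
rewrite (MC.lagr_fun p tau i). apply MC.horner_cont.
Qed.

Section Interface.
Variable p : nat.
Variable tau : nat -> R.
Hypothesis Hinc : forall m, (m < p)%nat -> tau m < tau (S m).
Hypothesis H0 : -1 < tau O.
Hypothesis Htp : tau p = 1.

Lemma tau_le : forall m k, (m <= k)%nat -> (k <= p)%nat -> tau m <= tau k.
Proof.
intros m k mk kp. induction mk as [|k mk IH]. lra.
assert (tau k < tau (S k)) by (apply Hinc; lia). specialize (IH ltac:(lia)). lra.
Qed.

Lemma tau_lt : forall m k, (m < k)%nat -> (k <= p)%nat -> tau m < tau k.
Proof.
intros m k mk kp. assert (tau m < tau (S m)) by (apply Hinc; lia).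
assert (tau (S m) <= tau k) by (apply tau_le; lia). lra.
Qed.

Lemma tau_inj : forall i j, (i <= p)%nat -> (j <= p)%nat -> tau i = tau j -> i = j.
Proof.
intros i j ip jp e. destruct (Nat.lt_trichotomy i j) as [h|[h|h]]; auto.
- pose proof (tau_lt i j h jp); lra.
- pose proof (tau_lt j i h ip); lra.
Qed.

Lemma tau_rng : forall m, (m <= p)%nat -> -1 < tau m <= 1.
Proof.
intros m mp. pose proof (tau_le 0 m ltac:(lia) mp). pose proof (tau_le m p mp ltac:(lia)). lra.
Qed.

Lemma Hinj' : forall i j, is_true (ssrnat.leq i p) -> is_true (ssrnat.leq j p) -> tau i = tau j -> i = j.
Proof. intros i j ip jp. apply tau_inj; [exact (ssrbool.elimT ssrnat.leP ip) | exact (ssrbool.elimT ssrnat.leP jp)]. Qed.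

Lemma Hrng' : forall m, is_true (ssrnat.leq m p) -> -1 < tau m <= 1.
Proof. intros m mp. apply tau_rng; exact (ssrbool.elimT ssrnat.leP mp). Qed.

Lemma lagr_sum1 x : sum_f_R0 (fun m => lagr p tau m x) p = 1.
Proof. exact (MC2.sum1 p tau Hinj' x). Qed.

Lemma Lmul_const c i : (i <= p)%nat -> Lmul p tau (fun _ => c) i = - c * lagr p tau i (-1).
Proof. intros ip. apply (MC2.Lmul_const p tau Hinj' Htp). exact (ssrbool.introT ssrnat.leP ip). Qed.

Lemma Lmul_lin c i : (i <= p)%nat ->
  Lmul p tau (fun m => c * (tau m + 1)) i = - c * Defs.RInt (lagr p tau i) (-1) 1.
Proof. intros ip. apply (MC2.Lmul_lin p tau Hinj' Htp). exact (ssrbool.introT ssrnat.leP ip). Qed.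

End Interface.

Lemma sum_nonneg (a : nat -> R) n : (forall k, (k <= n)%nat -> 0 <= a k) -> 0 <= sum_f_R0 a n.
Proof.
intros H; induction n; simpl. apply H; lia.
assert (0 <= a (S n)) by (apply H; lia). assert (0 <= sum_f_R0 a n) by (apply IHn; intros; apply H; lia). lra.
Qed.

Lemma sum_term_le (a : nat -> R) n i : (forall k, (k <= n)%nat -> 0 <= a k) -> (i <= n)%nat -> a i <= sum_f_R0 a n.
Proof.
intros H; induction n; intros ip; simpl.
- replace i with 0%nat by lia. lra.
- destruct (Nat.eq_dec i (S n)) as [->|ne].
  + assert (0 <= sum_f_R0 a n) by (apply sum_nonneg; intros; apply H; lia). lra.
  + assert (a i <= sum_f_R0 a n) by (apply IHn; [intros; apply H; lia | lia]).
    assert (0 <= a (S n)) by (apply H; lia). lra.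
Qed.

Lemma sum_ext (a b : nat -> R) n : (forall k, (k <= n)%nat -> a k = b k) -> sum_f_R0 a n = sum_f_R0 b n.
Proof.
intros H; induction n; simpl. apply H; lia.
rewrite IHn by (intros; apply H; lia). rewrite H by lia. reflexivity.
Qed.

Lemma sum_le (a b : nat -> R) n : (forall k, (k <= n)%nat -> a k <= b k) -> sum_f_R0 a n <= sum_f_R0 b n.
Proof. apply sum_Rle. Qed.

Lemma sum_mult_r (a : nat -> R) n c : sum_f_R0 (fun k => a k * c) n = sum_f_R0 a n * c.
Proof. induction n; simpl. reflexivity. rewrite IHn. ring. Qed.

Lemma sum_plus (a b : nat -> R) n : sum_f_R0 (fun k => a k + b k) n = sum_f_R0 a n + sum_f_R0 b n.
Proof. induction n; simpl. reflexivity. rewrite IHn. ring. Qed.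

Lemma sum_minus (a b : nat -> R) n : sum_f_R0 (fun k => a k - b k) n = sum_f_R0 a n - sum_f_R0 b n.
Proof. induction n; simpl. reflexivity. rewrite IHn. ring. Qed.

Lemma sum_const_le (a : nat -> R) n M : (forall k, (k <= n)%nat -> a k <= M) -> sum_f_R0 a n <= INR (S n) * M.
Proof.
intros H. apply Rle_trans with (sum_f_R0 (fun _ => M) n). apply sum_le; auto.
rewrite sum_cte. lra.
Qed.

Section LB.
Variable p : nat.
Variable tau : nat -> R.
Hypothesis Hinc : forall m, (m < p)%nat -> tau m < tau (S m).
Hypothesis H0 : -1 < tau O.
Hypothesis Htp : tau p = 1.

Lemma L_bound : exists C, 0 < C /\ forall V,
  sum_f_R0 (fun j => Rabs (V j)) p <= C * sum_f_R0 (fun i => Rabs (Lmul p tau V i)) p.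
Proof.
assert (Hi : forall V : nat -> R, (forall i, is_true (ssrnat.leq i p) -> sum_f_R0 (fun j => Lmat p tau i j * V j) p = 0) ->
     forall j, is_true (ssrnat.leq j p) -> V j = 0).
{ intros V HV. apply (MC2.L_inj p tau (Hinj' p tau Hinc) Htp (Hrng' p tau Hinc H0 Htp)). exact HV. }
destruct (MC2.inv_repr p (Lmat p tau) Hi) as [B HB].
set (Cb := sum_f_R0 (fun j => sum_f_R0 (fun i => Rabs (B j i)) p) p).
assert (Cb0 : 0 <= Cb) by (apply sum_nonneg; intros; apply sum_nonneg; intros; apply Rabs_pos).
exists (Cb + 1). split. lra. intros V.
set (S := sum_f_R0 (fun i => Rabs (Lmul p tau V i)) p).
assert (S0 : 0 <= S) by (apply sum_nonneg; intros; apply Rabs_pos).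
apply Rle_trans with (Cb * S); [| nra].
unfold Cb. rewrite <- sum_mult_r. apply sum_le. intros j jp.
rewrite (HB V j (ssrbool.introT ssrnat.leP jp)).
eapply Rle_trans. apply sum_f_R0_triangle.
rewrite <- sum_mult_r. apply sum_le. intros i ip.
rewrite Rabs_mult. apply Rmult_le_compat_l. apply Rabs_pos.
apply (sum_term_le (fun i => Rabs (Lmul p tau V i))); auto. intros; apply Rabs_pos.
Qed.

End LB.


Lemma cont_pt_eps (g : R -> R) x : continuity_pt g x <->
  (forall eps, 0 < eps -> exists d, 0 < d /\ forall y, Rabs (y - x) < d -> Rabs (g y - g x) < eps).
Proof.
split.
- intros H eps ep. destruct (H eps ep) as [d [dp Hd]]. exists d; split; auto.
  intros y hy. destruct (Req_dec y x) as [->|ne].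
  + rewrite Rminus_eq_0, Rabs_R0; lra.
  + apply (Hd y). split; [split; [exact I | auto] | exact hy].
- intros H eps ep. destruct (H eps ep) as [d [dp Hd]]. exists d; split; auto.
  intros y [_ hy]. apply Hd. exact hy.
Qed.

Lemma cont2_comp (g : R -> R -> R) (a b : R -> R) x :
  continuous2 g -> continuity_pt a x -> continuity_pt b x ->
  continuity_pt (fun y => g (a y) (b y)) x.
Proof.
intros Hg Ha Hb. apply cont_pt_eps. intros eps ep.
destruct (Hg (a x) (b x) eps ep) as [d [dp Hd]].
destruct (proj1 (cont_pt_eps a x) Ha d dp) as [da [dap Hda]].
destruct (proj1 (cont_pt_eps b x) Hb d dp) as [db [dbp Hdb]].
exists (Rmin da db). split. apply Rmin_glb_lt; auto.
intros y hy. apply Hd.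
- apply Hda. eapply Rlt_le_trans; [exact hy | apply Rmin_l].
- apply Hdb. eapply Rlt_le_trans; [exact hy | apply Rmin_r].
Qed.

Lemma bound1 (g : R -> R) a b : (forall x, a <= x <= b -> continuity_pt g x) ->
  exists M, forall x, a <= x <= b -> Rabs (g x) <= M.
Proof.
intros Hc. destruct (Rle_dec a b) as [ab|ab].
- destruct (continuity_ab_maj (fun x => Rabs (g x)) a b ab) as [Mx [HM _]].
  + intros c hc. apply (continuity_pt_comp g Rabs); [apply Hc; auto | apply Rcontinuity_abs].
  + exists (Rabs (g Mx)). exact HM.
- exists 0. intros x hx. lra.
Qed.

Lemma step1 (g : R -> R -> R) c d t0 : continuous2 g ->
  exists dl, 0 < dl /\ forall t y, Rabs (t - t0) < dl -> c <= y <= d -> Rabs (g t y - g t0 y) <= 1.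
Proof.
intros Hg.
assert (X : forall y, {dl : posreal | forall s z, Rabs (s - t0) < dl -> Rabs (z - y) < dl ->
                                      Rabs (g s z - g t0 y) < 1/2}).
{ intros y. apply constructive_indefinite_description.
  destruct (Hg t0 y (1/2) ltac:(lra)) as [dl [dlp Hdl]].
  exists (mkposreal dl dlp). simpl. exact Hdl. }
destruct (compactness_value_1d c d (fun y => proj1_sig (X y))) as [d1 Hd1].
exists d1. split. apply cond_pos.
intros t y ht hy.
destruct (classic (exists y0, c <= y0 <= d /\ Rabs (y - y0) < proj1_sig (X y0) /\ d1 <= proj1_sig (X y0)))
  as [[y0 [hy0 [h1 h2]]]|nE]; [| exfalso; exact (Hd1 y hy nE)].
destruct (X y0) as [dl Hdl]; simpl in *.
assert (A1 : Rabs (g t y - g t0 y0) < 1/2) by (apply Hdl; lra).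
assert (A2 : Rabs (g t0 y - g t0 y0) < 1/2).
{ apply Hdl; auto. rewrite Rminus_eq_0, Rabs_R0. apply cond_pos. }
replace (g t y - g t0 y) with ((g t y - g t0 y0) - (g t0 y - g t0 y0)) by ring.
eapply Rle_trans. apply Rabs_triang. rewrite Rabs_Ropp. lra.
Qed.

Lemma bound2 (g : R -> R -> R) a b c d : continuous2 g ->
  exists M, forall t y, a <= t <= b -> c <= y <= d -> Rabs (g t y) <= M.
Proof.
intros Hg.
assert (X : forall t0, {dl : posreal | forall t y, Rabs (t - t0) < dl -> c <= y <= d ->
                                          Rabs (g t y - g t0 y) <= 1}).
{ intros t0. apply constructive_indefinite_description.
  destruct (step1 g c d t0 Hg) as [dl [dlp Hdl]].
  exists (mkposreal dl dlp). exact Hdl. }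
assert (hpos : forall t0, 0 < proj1_sig (X t0) / 2) by (intros; pose proof (cond_pos (proj1_sig (X t0))); lra).
destruct (compactness_value_1d a b (fun t0 => mkposreal _ (hpos t0))) as [d2 Hd2].
assert (d2p : 0 < d2) by apply cond_pos.
assert (Cl : forall t t' y, a <= t <= b -> Rabs (t - t') < d2 -> c <= y <= d ->
           Rabs (g t y - g t' y) <= 2).
{ intros t t' y ht htt hy.
  destruct (classic (exists t0, a <= t0 <= b /\ Rabs (t - t0) < proj1_sig (X t0) / 2 /\ d2 <= proj1_sig (X t0) / 2))
    as [[t0 [ht0 [h1 h2]]]|nE]; [| exfalso; exact (Hd2 t ht nE)].
  destruct (X t0) as [dl Hdl]; simpl in *.
  assert (A1 : Rabs (g t y - g t0 y) <= 1) by (apply Hdl; auto; lra).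
  assert (A2 : Rabs (g t' y - g t0 y) <= 1).
  { apply Hdl; auto. replace (t' - t0) with ((t - t0) - (t - t')) by ring.
    eapply Rle_lt_trans. apply Rabs_triang. rewrite Rabs_Ropp. lra. }
  replace (g t y - g t' y) with ((g t y - g t0 y) - (g t' y - g t0 y)) by ring.
  eapply Rle_trans. apply Rabs_triang. rewrite Rabs_Ropp. lra. }
assert (Ch : forall y, c <= y <= d -> forall n : nat, forall t, a <= t <= b -> t <= a + INR n * (d2 / 2) ->
           Rabs (g t y) <= Rabs (g a y) + 2 * INR n).
{ intros y hy n. induction n as [|n IH]; intros t ht htn.
  - simpl in htn. replace t with a by lra. simpl; lra.
  - rewrite S_INR in *.
    destruct (Rle_dec (t - d2 / 2) a) as [h|h].
    + assert (Rabs (g t y - g a y) <= 2).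
      { apply Cl; auto. apply Rabs_def1; lra. }
      pose proof (Rabs_triang_inv (g t y) (g a y)). pose proof (pos_INR n). lra.
    + assert (H1 : Rabs (g (t - d2/2) y) <= Rabs (g a y) + 2 * INR n) by (apply IH; lra).
      assert (Rabs (g t y - g (t - d2/2) y) <= 2).
      { apply Cl; auto. apply Rabs_def1; lra. }
      pose proof (Rabs_triang_inv (g t y) (g (t - d2/2) y)). lra. }
destruct (bound1 (fun y => g a y) c d) as [Ma HMa].
{ intros y _. apply (cont2_comp g (fun _ => a) (fun y => y) y Hg).
  apply continuity_pt_const; intros u v; reflexivity. apply continuity_pt_id. }
assert (hx : 0 <= Rmax 0 ((b - a) / (d2 / 2))) by apply Rmax_l.
destruct (nfloor_ex _ hx) as [n [_ hn]].
exists (Ma + 2 * INR (S n)).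
intros t y ht hy.
assert (Rabs (g t y) <= Rabs (g a y) + 2 * INR (S n)).
{ apply Ch; auto. rewrite S_INR.
  assert ((b - a) / (d2 / 2) <= Rmax 0 ((b - a) / (d2 / 2))) by apply Rmax_r.
  assert ((b - a) / (d2/2) * (d2/2) = b - a) by (field; lra).
  assert ((b - a) / (d2 / 2) * (d2/2) <= (INR n + 1) * (d2 / 2)).
  { apply Rmult_le_compat_r; lra. }
  lra. }
pose proof (HMa y hy). lra.
Qed.

Definition nrm (p : nat) (V : nat -> R) := sum_f_R0 (fun m => Rabs (V m)) p.
Definition Qv (p : nat) (tau : nat -> R) (V : nat -> R) (x : R) :=
  sum_f_R0 (fun m => V m * lagr p tau m x) p.

Lemma nrm_nonneg p V : 0 <= nrm p V.
Proof. apply sum_nonneg; intros; apply Rabs_pos. Qed.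

Lemma nrm_term p V m : (m <= p)%nat -> Rabs (V m) <= nrm p V.
Proof. intros mp. apply (sum_term_le (fun m => Rabs (V m))); auto. intros; apply Rabs_pos. Qed.

Lemma Lmul_minus p tau V W i :
  Lmul p tau (fun m => V m - W m) i = Lmul p tau V i - Lmul p tau W i.
Proof.
unfold Lmul. rewrite <- sum_minus. apply sum_ext. intros; ring.
Qed.

Lemma cont_sum (g : nat -> R -> R) n x : (forall k, continuity_pt (g k) x) ->
  continuity_pt (fun y => sum_f_R0 (fun k => g k y) n) x.
Proof.
intros H; induction n; simpl.
- apply H.
- apply (continuity_pt_plus (fun y => sum_f_R0 (fun k => g k y) n) (g (S n))); auto.
Qed.

Lemma Qv_cont p tau V x : continuity_pt (Qv p tau V) x.
Proof.
unfold Qv. apply (cont_sum (fun m y => V m * lagr p tau m y)). intros k.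
apply (continuity_pt_mult (fun _ => V k) (lagr p tau k)).
apply continuity_pt_const; intros u v; reflexivity. apply lagr_cont.
Qed.

Section Est.
Variable p : nat.
Variable tau : nat -> R.
Variable f : R -> R -> R.
Hypothesis Hf : continuous2 f.
Variable Lf : R.
Hypothesis HLf0 : 0 <= Lf.
Hypothesis HLf : forall t x y, Rabs (f t x - f t y) <= Lf * Rabs (x - y).
Variable Lam : R.
Hypothesis HLam : forall m x, (m <= p)%nat -> -1 <= x <= 1 -> Rabs (lagr p tau m x) <= Lam.
Hypothesis Hsum1 : forall x, sum_f_R0 (fun m => lagr p tau m x) p = 1.

Lemma Lam_pos : 0 <= Lam.
Proof. pose proof (HLam 0 0 ltac:(lia) ltac:(lra)). pose proof (Rabs_pos (lagr p tau 0 0)). lra. Qed.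

Definition integrand tn dt V j x := f (tn + (x + 1) * dt / 2) (Qv p tau V x) * lagr p tau j x.

Lemma integrand_ex tn dt V j : ex_RInt (integrand tn dt V j) (-1) 1.
Proof.
apply (@ex_RInt_continuous R_CompleteNormedModule). intros z _.
apply continuity_pt_filterlim. unfold integrand.
apply (continuity_pt_mult (fun x => f (tn + (x + 1) * dt / 2) (Qv p tau V x)) (lagr p tau j)).
- apply cont2_comp; auto.
  + apply derivable_continuous_pt. apply derivable_pt_plus. apply derivable_pt_const.
    apply derivable_pt_div. apply derivable_pt_mult. apply derivable_pt_plus. apply derivable_pt_id.
    apply derivable_pt_const. apply derivable_pt_const. apply derivable_pt_const. lra.
  + apply Qv_cont.
- apply lagr_cont.
Qed.

Lemma Fvec_eq tn dt V j : Fvec p tau f tn dt V j = RInt (integrand tn dt V j) (-1) 1.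
Proof. unfold Fvec. apply DRInt_eq. apply integrand_ex. Qed.

Lemma Qv_diff V W x : -1 <= x <= 1 -> Rabs (Qv p tau V x - Qv p tau W x) <= Lam * nrm p (fun m => V m - W m).
Proof.
intros hx. unfold Qv. rewrite <- sum_minus.
eapply Rle_trans. apply sum_f_R0_triangle.
unfold nrm. rewrite scal_sum. apply sum_le. intros k kp.
replace (V k * lagr p tau k x - W k * lagr p tau k x) with ((V k - W k) * lagr p tau k x) by ring.
rewrite Rabs_mult. apply Rmult_le_compat_l. apply Rabs_pos. apply HLam; auto.
Qed.

Lemma Qv_const_sub V c x : Qv p tau V x - c = Qv p tau (fun m => V m - c) x.
Proof.
unfold Qv. rewrite <- (Rmult_1_r c) at 1. rewrite <- (Hsum1 x), scal_sum, <- sum_minus.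
apply sum_ext; intros; ring.
Qed.

Lemma F_lip tn dt V W j : (j <= p)%nat ->
  Rabs (Fvec p tau f tn dt V j - Fvec p tau f tn dt W j) <= 2 * (Lf * (Lam * nrm p (fun m => V m - W m)) * Lam).
Proof.
intros jp. rewrite !Fvec_eq.
assert (e : RInt (integrand tn dt V j) (-1) 1 - RInt (integrand tn dt W j) (-1) 1 =
            RInt (fun x => integrand tn dt V j x - integrand tn dt W j x) (-1) 1).
{ symmetry. apply (RInt_minus (V := R_CompleteNormedModule)); apply integrand_ex. }
rewrite e. replace 2 with (1 - -1) by ring.
apply abs_RInt_le_const. lra.
apply (ex_RInt_minus (V := R_CompleteNormedModule)); apply integrand_ex.
intros x hx. unfold integrand.
replace (f (tn + (x + 1) * dt / 2) (Qv p tau V x) * lagr p tau j x -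
         f (tn + (x + 1) * dt / 2) (Qv p tau W x) * lagr p tau j x)
  with ((f (tn + (x + 1) * dt / 2) (Qv p tau V x) - f (tn + (x + 1) * dt / 2) (Qv p tau W x)) * lagr p tau j x) by ring.
rewrite Rabs_mult. apply Rmult_le_compat. apply Rabs_pos. apply Rabs_pos.
- eapply Rle_trans. apply HLf. apply Rmult_le_compat_l; auto. apply Qv_diff; auto.
- apply HLam; auto.
Qed.

Lemma int_lagr_bound j : (j <= p)%nat -> Rabs (Defs.RInt (lagr p tau j) (-1) 1) <= 2 * Lam.
Proof.
intros jp. rewrite DRInt_eq.
- replace 2 with (1 - -1) by ring. apply abs_RInt_le_const. lra.
  apply (@ex_RInt_continuous R_CompleteNormedModule). intros z _.
  apply continuity_pt_filterlim. apply lagr_cont.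
  intros; apply HLam; auto.
- apply (@ex_RInt_continuous R_CompleteNormedModule). intros z _.
  apply continuity_pt_filterlim. apply lagr_cont.
Qed.

Lemma F_approx tn dt V c E j : (j <= p)%nat ->
  (forall x, -1 <= x <= 1 -> Rabs (f (tn + (x + 1) * dt / 2) c - f tn c) <= E) ->
  Rabs (Fvec p tau f tn dt V j - f tn c * Defs.RInt (lagr p tau j) (-1) 1)
    <= 2 * ((Lf * (Lam * nrm p (fun m => V m - c)) + E) * Lam).
Proof.
intros jp HE. rewrite Fvec_eq.
assert (exl : ex_RInt (lagr p tau j) (-1) 1).
{ apply (@ex_RInt_continuous R_CompleteNormedModule). intros z _.
  apply continuity_pt_filterlim. apply lagr_cont. }
rewrite (DRInt_eq _ _ _ exl).
assert (e : RInt (integrand tn dt V j) (-1) 1 - f tn c * RInt (lagr p tau j) (-1) 1 =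
            RInt (fun x => integrand tn dt V j x - f tn c * lagr p tau j x) (-1) 1).
{ rewrite (RInt_minus (V := R_CompleteNormedModule)); [| apply integrand_ex |].
  - replace (RInt (fun x => f tn c * lagr p tau j x) (-1) 1) with (f tn c * RInt (lagr p tau j) (-1) 1).
    + unfold minus, plus, opp; simpl. ring.
    + symmetry. apply (RInt_scal (V := R_CompleteNormedModule)). exact exl.
  - apply (ex_RInt_scal (V := R_CompleteNormedModule)). exact exl. }
rewrite e. replace 2 with (1 - -1) by ring.
apply abs_RInt_le_const. lra.
apply (ex_RInt_minus (V := R_CompleteNormedModule)). apply integrand_ex.
apply (ex_RInt_scal (V := R_CompleteNormedModule)). exact exl.
intros x hx. unfold integrand.
replace (f (tn + (x + 1) * dt / 2) (Qv p tau V x) * lagr p tau j x - f tn c * lagr p tau j x)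
  with (((f (tn + (x + 1) * dt / 2) (Qv p tau V x) - f (tn + (x + 1) * dt / 2) c)
        + (f (tn + (x + 1) * dt / 2) c - f tn c)) * lagr p tau j x) by ring.
rewrite Rabs_mult. apply Rmult_le_compat. apply Rabs_pos. apply Rabs_pos.
- eapply Rle_trans. apply Rabs_triang. apply Rplus_le_compat; [| apply HE; auto].
  eapply Rle_trans. apply HLf. apply Rmult_le_compat_l; auto.
  rewrite Qv_const_sub. replace (Qv p tau (fun m => V m - c) x) with
     (Qv p tau (fun m => V m - c) x - Qv p tau (fun _ => 0) x).
  + eapply Rle_trans. apply Qv_diff; auto. right. unfold nrm. f_equal. apply sum_ext. intros. rewrite Rminus_0_r. reflexivity.
  + unfold Qv. rewrite (sum_ext (fun m => 0 * lagr p tau m x) (fun _ => 0)) by (intros; ring). rewrite sum_cte. ring.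
- apply HLam; auto.
Qed.

End Est.

Lemma Lmul_ext p tau V W i : (forall m, (m <= p)%nat -> V m = W m) -> Lmul p tau V i = Lmul p tau W i.
Proof. intros H. unfold Lmul. apply sum_ext. intros k kp. rewrite H by auto. reflexivity. Qed.

Lemma nrm_triang p V W X : nrm p (fun m => V m - W m) <= nrm p (fun m => V m - X m) + nrm p (fun m => X m - W m).
Proof.
unfold nrm. rewrite <- sum_plus. apply sum_le. intros k _.
replace (V k - W k) with ((V k - X k) + (X k - W k)) by ring. apply Rabs_triang.
Qed.

Fixpoint Kseq (Lf M0 Mt : R) (m : nat) : R :=
  match m with O => 0 | S k => (1 + Lf) * Kseq Lf M0 Mt k + (Lf * M0 + Mt) end.

Lemma Kseq_nonneg Lf M0 Mt m : 0 <= Lf -> 0 <= M0 -> 0 <= Mt -> 0 <= Kseq Lf M0 Mt m.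
Proof. intros; induction m; simpl. lra. nra. Qed.

Section Core.
Variable p : nat.
Variable tau : nat -> R.
Hypothesis Hinc : forall m, (m < p)%nat -> tau m < tau (S m).
Hypothesis H0 : -1 < tau O.
Hypothesis Htp : tau p = 1.
Variable f : R -> R -> R.
Hypothesis Hf : continuous2 f.
Variable Lf : R.
Hypothesis HLf0 : 0 <= Lf.
Hypothesis HLf : forall t x y, Rabs (f t x - f t y) <= Lf * Rabs (x - y).
Variable Lam : R.
Hypothesis HLam : forall m x, (m <= p)%nat -> -1 <= x <= 1 -> Rabs (lagr p tau m x) <= Lam.
Variable Cinv : R.
Hypothesis HCinv0 : 0 < Cinv.
Hypothesis HCinv : forall V, nrm p V <= Cinv * sum_f_R0 (fun i => Rabs (Lmul p tau V i)) p.
Variables M0 Mt : R.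
Hypothesis HM00 : 0 <= M0.
Hypothesis HMt0 : 0 <= Mt.
Variables tn dt un : R.
Hypothesis Hdt : 0 < dt <= 1.
Hypothesis Hf0 : Rabs (f tn un) <= M0.
Hypothesis HE : forall s, tn <= s <= tn + dt -> Rabs (f s un - f tn un) <= Mt * dt.

Let P1 := INR (S p).
Let q := Cinv * P1 * Lf * Lam * Lam.
Hypothesis Hq : q * dt <= 1/2.

Let Hsum1 := lagr_sum1 p tau Hinc.
Let Lam0 := Lam_pos p tau Lam HLam.
Let P10 : 0 < P1 := lt_0_INR _ (Nat.lt_0_succ p).

Lemma L_est V beta : (forall i, (i <= p)%nat -> Rabs (Lmul p tau V i) <= beta) -> nrm p V <= Cinv * P1 * beta.
Proof.
intros H. eapply Rle_trans. apply HCinv. rewrite Rmult_assoc. apply Rmult_le_compat_l. lra.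
apply sum_const_le. exact H.
Qed.

Lemma HE' : forall x, -1 <= x <= 1 -> Rabs (f (tn + (x + 1) * dt / 2) un - f tn un) <= Mt * dt.
Proof. intros x hx. apply HE. split; nra. Qed.

Variable Uh : nat -> R.
Hypothesis Hdg : dg_system p tau f tn dt un Uh.

Lemma dg_L i : (i <= p)%nat -> Lmul p tau Uh i = - (dt / 2) * Fvec p tau f tn dt Uh i - Bvec p tau un i.
Proof. intros ip. pose proof (Hdg i ip). lra. Qed.

Definition A1 := 2 * Cinv * P1 * Lam * (Mt + M0).

Lemma est_a : nrm p (fun m => Uh m - un) <= A1 * dt.
Proof.
set (a := nrm p (fun m => Uh m - un)).
assert (a0 : 0 <= a) by apply nrm_nonneg.
assert (Hb : a <= Cinv * P1 * (dt * Lam * (Lf * Lam * a + Mt * dt + M0))).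
{ apply L_est. intros i ip.
  rewrite Lmul_minus, dg_L, Lmul_const by auto. unfold Bvec.
  replace (- (dt / 2) * Fvec p tau f tn dt Uh i - un * lagr p tau i (-1) - - un * lagr p tau i (-1))
    with (- (dt / 2) * Fvec p tau f tn dt Uh i) by ring.
  pose proof (F_approx p tau f Hf Lf HLf0 HLf Lam HLam Hsum1 tn dt Uh un (Mt * dt) i ip HE') as HA.
  pose proof (int_lagr_bound p tau Lam HLam i ip) as HI.
  set (F := Fvec p tau f tn dt Uh i) in *. set (I := Defs.RInt (lagr p tau i) (-1) 1) in *.
  fold a in HA.
  assert (Rabs F <= 2 * ((Lf * (Lam * a) + Mt * dt) * Lam) + M0 * (2 * Lam)).
  { replace F with ((F - f tn un * I) + f tn un * I) by ring.
    eapply Rle_trans. apply Rabs_triang. apply Rplus_le_compat; auto.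
    rewrite Rabs_mult. apply Rmult_le_compat; auto using Rabs_pos. }
  rewrite Rabs_mult. rewrite Rabs_Ropp. rewrite (Rabs_right (dt/2)) by lra.
  apply Rle_trans with (dt / 2 * (2 * ((Lf * (Lam * a) + Mt * dt) * Lam) + M0 * (2 * Lam))).
  apply Rmult_le_compat_l; lra. right; field. }
assert (e1 : Cinv * P1 * (dt * Lam * (Lf * Lam * a)) = q * dt * a) by (unfold q; ring).
assert (q * dt * a <= 1/2 * a) by (apply Rmult_le_compat_r; auto).
assert (Cinv * P1 * (dt * Lam * (Mt * dt + M0)) <= Cinv * P1 * (dt * Lam * (Mt + M0))).
{ apply Rmult_le_compat_l. pose proof HCinv0; nra.
  apply Rmult_le_compat_l. nra. nra. }
unfold A1. nra.
Qed.

Lemma L_Uh_un i : (i <= p)%nat -> Lmul p tau (fun m => Uh m - un) i = - (dt / 2) * Fvec p tau f tn dt Uh i.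
Proof.
intros ip. rewrite Lmul_minus, dg_L, Lmul_const by auto. unfold Bvec. ring.
Qed.

Definition A2 := Cinv * P1 * Lam * (Lf * Lam * A1 + Mt).
Definition Evec (m : nat) := un + (dt / 2 * f tn un) * (tau m + 1).

Lemma est_b : nrm p (fun m => Uh m - Evec m) <= A2 * (dt * dt).
Proof.
pose proof est_a as Ha.
set (a := nrm p (fun m => Uh m - un)) in *.
assert (a0 : 0 <= a) by apply nrm_nonneg.
apply Rle_trans with (Cinv * P1 * (dt * Lam * (Lf * Lam * a + Mt * dt))).
- apply L_est. intros i ip.
  rewrite (Lmul_ext p tau _ (fun m => (Uh m - un) - (dt / 2 * f tn un) * (tau m + 1)))
    by (intros; unfold Evec; ring).
  rewrite Lmul_minus, L_Uh_un, (Lmul_lin p tau Hinc Htp) by auto.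
  pose proof (F_approx p tau f Hf Lf HLf0 HLf Lam HLam Hsum1 tn dt Uh un (Mt * dt) i ip HE') as HA.
  fold a in HA.
  set (F := Fvec p tau f tn dt Uh i) in *. set (I := Defs.RInt (lagr p tau i) (-1) 1) in *.
  replace (- (dt / 2) * F - - (dt / 2 * f tn un) * I) with (- (dt / 2) * (F - f tn un * I)) by ring.
  rewrite Rabs_mult, Rabs_Ropp, (Rabs_right (dt/2)) by lra.
  apply Rle_trans with (dt / 2 * (2 * ((Lf * (Lam * a) + Mt * dt) * Lam))).
  apply Rmult_le_compat_l; lra. right; field.
- unfold A2.
  assert (Lf * Lam * a <= Lf * Lam * (A1 * dt)) by (apply Rmult_le_compat_l; [nra | exact Ha]).
  assert (0 <= Cinv * P1) by nra.
  assert (dt * Lam * (Lf * Lam * a + Mt * dt) <= dt * Lam * (Lf * Lam * (A1 * dt) + Mt * dt)).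
  { apply Rmult_le_compat_l; nra. }
  apply Rle_trans with (Cinv * P1 * (dt * Lam * (Lf * Lam * (A1 * dt) + Mt * dt))).
  apply Rmult_le_compat_l; auto. right; ring.
Qed.

Lemma est_e m : (m <= p)%nat ->
  Rabs (euler0 tau f tn dt un m - Evec m) <= Kseq Lf M0 Mt m * (dt * dt).
Proof.
induction m as [|m IH]; intros mp.
- simpl. unfold node, Evec.
  replace (un + (tn + (tau 0 + 1) * dt / 2 - tn) * f tn un - (un + dt / 2 * f tn un * (tau 0 + 1))) with 0 by field.
  rewrite Rabs_R0. lra.
- specialize (IH ltac:(lia)).
  pose proof (tau_rng p tau Hinc H0 Htp m ltac:(lia)) as Rm.
  pose proof (tau_rng p tau Hinc H0 Htp (S m) mp) as RSm.
  pose proof (Hinc m ltac:(lia)) as Im.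
  simpl euler0. set (U := euler0 tau f tn dt un m) in *.
  set (e := U - Evec m) in *.
  set (D := node tau tn dt (S m) - node tau tn dt m).
  assert (HD : 0 <= D <= dt) by (unfold D, node; split; nra).
  assert (eq1 : U + D * f (node tau tn dt m) U - Evec (S m) = e + D * (f (node tau tn dt m) U - f tn un)).
  { unfold e, D, node, Evec. field. }
  rewrite eq1.
  assert (Hn : tn <= node tau tn dt m <= tn + dt) by (unfold node; split; nra).
  assert (HU : Rabs (U - un) <= Rabs e + dt * M0).
  { replace (U - un) with (e + (Evec m - un)) by (unfold e; ring).
    eapply Rle_trans. apply Rabs_triang. apply Rplus_le_compat_l.
    unfold Evec. replace (un + dt / 2 * f tn un * (tau m + 1) - un) with (f tn un * (dt / 2 * (tau m + 1))) by ring.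
    rewrite Rabs_mult, (Rabs_right (dt / 2 * (tau m + 1))) by nra.
    apply Rle_trans with (M0 * (dt / 2 * (tau m + 1))). apply Rmult_le_compat_r; nra. rewrite (Rmult_comm dt M0). apply Rmult_le_compat_l; nra. }
  assert (Hfd : Rabs (f (node tau tn dt m) U - f tn un) <= Lf * (Rabs e + dt * M0) + Mt * dt).
  { replace (f (node tau tn dt m) U - f tn un) with
      ((f (node tau tn dt m) U - f (node tau tn dt m) un) + (f (node tau tn dt m) un - f tn un)) by ring.
    eapply Rle_trans. apply Rabs_triang. apply Rplus_le_compat.
    eapply Rle_trans. apply HLf. apply Rmult_le_compat_l; auto.
    apply HE; auto. }
  eapply Rle_trans. apply Rabs_triang. rewrite Rabs_mult, (Rabs_right D) by lra.
  assert (K0 : 0 <= Kseq Lf M0 Mt m) by (apply Kseq_nonneg; auto).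
  assert (e0 : 0 <= Rabs e) by apply Rabs_pos.
  assert (D * Rabs (f (node tau tn dt m) U - f tn un) <= dt * (Lf * (Rabs e + dt * M0) + Mt * dt)).
  { apply Rmult_le_compat; auto using Rabs_pos; lra. }
  simpl Kseq.
  assert (dt * Lf * Rabs e <= dt * Lf * (Kseq Lf M0 Mt m * (dt * dt))) by (apply Rmult_le_compat_l; nra).
  assert (dt * Lf * (Kseq Lf M0 Mt m * (dt * dt)) <= Lf * Kseq Lf M0 Mt m * (dt * dt)).
  { replace (dt * Lf * (Kseq Lf M0 Mt m * (dt * dt))) with (dt * (Lf * Kseq Lf M0 Mt m * (dt * dt))) by ring.
    assert (0 <= Lf * Kseq Lf M0 Mt m * (dt * dt)) by (apply Rmult_le_pos; nra).
    nra. }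
  nra.
Qed.

Variable Useq : nat -> nat -> R.
Hypothesis Hfp : fp_iteration p tau f tn dt un Useq.

Definition Ke := sum_f_R0 (fun m => Kseq Lf M0 Mt m) p.
Definition C0 := A2 + Ke.

Lemma est_0 : nrm p (fun m => Uh m - Useq O m) <= C0 * (dt * dt).
Proof.
eapply Rle_trans. apply (nrm_triang p Uh (Useq O) Evec).
unfold C0. rewrite Rmult_plus_distr_r. apply Rplus_le_compat. apply est_b.
unfold Ke. rewrite <- sum_mult_r. unfold nrm. apply sum_le. intros k kp.
destruct Hfp as [Hf1 _]. rewrite Hf1 by auto.
rewrite Rabs_minus_sym. apply est_e; auto.
Qed.

Lemma est_k k : nrm p (fun m => Uh m - Useq k m) <= (q * dt) ^ k * (C0 * (dt * dt)).
Proof.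
induction k as [|k IH].
- simpl. rewrite Rmult_1_l. apply est_0.
- assert (qdt0 : 0 <= q * dt).
  { unfold q. pose proof (Rle_0_sqr Lam). apply Rmult_le_pos; [|lra].
    replace (Cinv * P1 * Lf * Lam * Lam) with (Cinv * P1 * Lf * (Lam * Lam)) by ring.
    apply Rmult_le_pos; [|unfold Rsqr in *; lra]. apply Rmult_le_pos; [|lra]. nra. }
  set (nk := nrm p (fun m => Uh m - Useq k m)) in *.
  apply Rle_trans with (q * dt * nk).
  + replace (q * dt * nk) with (Cinv * P1 * (dt * Lf * Lam * Lam * nk)) by (unfold q; ring).
    apply L_est. intros i ip.
    destruct Hfp as [_ Hf2].
    rewrite Lmul_minus, dg_L, Hf2 by auto.
    replace (- (dt / 2) * Fvec p tau f tn dt Uh i - Bvec p tau un i -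
             (- (dt / 2) * Fvec p tau f tn dt (Useq k) i - Bvec p tau un i))
      with (- (dt / 2) * (Fvec p tau f tn dt Uh i - Fvec p tau f tn dt (Useq k) i)) by ring.
    rewrite Rabs_mult, Rabs_Ropp, (Rabs_right (dt/2)) by lra.
    pose proof (F_lip p tau f Hf Lf HLf0 HLf Lam HLam tn dt Uh (Useq k) i ip) as HF.
    fold nk in HF.
    apply Rle_trans with (dt / 2 * (2 * (Lf * (Lam * nk) * Lam))).
    apply Rmult_le_compat_l; lra. right; field.
  + simpl. replace (q * dt * ((q * dt) ^ k) * (C0 * (dt * dt))) with (q * dt * ((q * dt) ^ k * (C0 * (dt * dt)))) by ring.
    apply Rmult_le_compat_l; auto.
Qed.

End Core.

Theorem lemma3 (p : nat) (T u0 : R) (f : R -> R -> R) (u : R -> R)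
    (tau w : nat -> R) :
  0 < T ->
  C_k2 (2 * p + 1) f ->
  lipschitz_in_u f ->
  u 0 = u0 ->
  (forall t, 0 <= t <= T -> derivable_pt_lim u t (f t (u t))) ->
  right_gauss_radau p tau w ->
  forall K : nat,
  exists C h0, 0 < C /\ 0 < h0 /\
    forall h tn dt, 0 < h <= h0 -> 0 <= tn -> 0 < dt <= h -> tn + dt <= T ->
    forall (Uh : nat -> R) (Useq : nat -> nat -> R),
      dg_system p tau f tn dt (u tn) Uh ->
      fp_iteration p tau f tn dt (u tn) Useq ->
      forall m, (m <= p)%nat ->
        Rabs (Uh m - Useq K m) <= C * h ^ (K + 2).
Proof.
intros HT Hk Hlip Hu0 Hu Hrad K.
destruct Hrad as [Ht0 [Hinc [Htp _]]].
destruct Hk as [D [HD00 [HDc HDd]]].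
assert (Hf : continuous2 f) by (rewrite <- HD00; apply HDc; lia).
assert (HD10 : continuous2 (D 1%nat 0%nat)) by (apply HDc; lia).
assert (Hdt : forall t x, derivable_pt_lim (fun s => f s x) t (D 1%nat 0%nat t x)).
{ intros t x. rewrite <- HD00. apply (HDd 0%nat 0%nat ltac:(lia) t x). }
destruct Hlip as [Lf [HLf0 HLf]].
assert (absle : forall y M, Rabs y <= M -> -M <= y <= M).
{ intros y M hy. pose proof (Rle_abs y). pose proof (Rle_abs (-y)). rewrite Rabs_Ropp in *. lra. }
destruct (bound1 u 0 T) as [Mu HMu].
{ intros t ht. apply derivable_continuous_pt. exists (f t (u t)). apply Hu; auto. }
assert (Mu0 : 0 <= Mu) by (pose proof (HMu 0 ltac:(lra)); pose proof (Rabs_pos (u 0)); lra).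
destruct (bound2 f 0 T (-Mu) Mu Hf) as [M0 HM0].
assert (HM00 : 0 <= M0) by (pose proof (HM0 0 0 ltac:(lra) ltac:(lra)); pose proof (Rabs_pos (f 0 0)); lra).
destruct (bound2 (D 1%nat 0%nat) 0 T (-Mu) Mu HD10) as [Mt HMt].
assert (HMt0 : 0 <= Mt) by (pose proof (HMt 0 0 ltac:(lra) ltac:(lra)); pose proof (Rabs_pos (D 1%nat 0%nat 0 0)); lra).
assert (HTL : forall s t y, 0 <= s <= T -> 0 <= t <= T -> Rabs y <= Mu -> Rabs (f s y - f t y) <= Mt * Rabs (s - t)).
{ intros s t y hs ht hy. pose proof (absle y Mu hy) as hy'.
  destruct (Rtotal_order t s) as [ts|[ts|ts]].
  - destruct (MVT_cor2 (fun r => f r y) (fun r => D 1%nat 0%nat r y) t s ts (fun c _ => Hdt c y)) as [c0 [e hc]].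
    rewrite e, Rabs_mult. apply Rmult_le_compat_r. apply Rabs_pos. apply HMt; auto. lra.
  - subst. rewrite !Rminus_eq_0, Rabs_R0. lra.
  - destruct (MVT_cor2 (fun r => f r y) (fun r => D 1%nat 0%nat r y) s t ts (fun c _ => Hdt c y)) as [c0 [e hc]].
    rewrite Rabs_minus_sym, e, Rabs_mult, (Rabs_minus_sym s t). apply Rmult_le_compat_r. apply Rabs_pos.
    apply HMt; auto. lra. }
set (Sx := fun x => sum_f_R0 (fun m => Rabs (lagr p tau m x)) p).
destruct (bound1 Sx (-1) 1) as [Lam HLamS].
{ intros x _. unfold Sx. apply (cont_sum (fun m y => Rabs (lagr p tau m y))). intros k.
  apply (continuity_pt_comp (lagr p tau k) Rabs). apply lagr_cont. apply Rcontinuity_abs. }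
assert (HLam : forall m x, (m <= p)%nat -> -1 <= x <= 1 -> Rabs (lagr p tau m x) <= Lam).
{ intros m x mp hx. apply Rle_trans with (Sx x).
  apply (sum_term_le (fun m => Rabs (lagr p tau m x))); auto. intros; apply Rabs_pos.
  eapply Rle_trans. apply Rle_abs. apply HLamS; auto. }
assert (Lam0 : 0 <= Lam) by (apply (Lam_pos p tau Lam HLam)).
destruct (L_bound p tau Hinc Ht0 Htp) as [Cinv [HC0 HC]].
set (q := Cinv * INR (S p) * Lf * Lam * Lam).
assert (P10 : 0 < INR (S p)) by (apply lt_0_INR; lia).
assert (q0 : 0 <= q).
{ unfold q. apply Rmult_le_pos; auto. apply Rmult_le_pos; auto. apply Rmult_le_pos; auto. nra. }
set (C0v := C0 p Lf Lam Cinv M0 Mt).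
assert (C00 : 0 <= C0v).
{ unfold C0v, C0, A2, A1, Ke. apply Rplus_le_le_0_compat.
  - assert (0 <= Cinv * INR (S p)) by nra.
    assert (0 <= 2 * Cinv * INR (S p) * Lam * (Mt + M0)).
    { apply Rmult_le_pos; [| lra]. apply Rmult_le_pos; auto. nra. }
    assert (0 <= Lf * Lam * (2 * Cinv * INR (S p) * Lam * (Mt + M0)) + Mt).
    { apply Rplus_le_le_0_compat; auto. apply Rmult_le_pos; auto. apply Rmult_le_pos; auto. }
    apply Rmult_le_pos; auto. apply Rmult_le_pos; auto.
  - apply sum_nonneg. intros; apply Kseq_nonneg; auto. }
assert (qK0 : 0 <= q ^ K) by (apply pow_le; auto).
exists (C0v * q ^ K + 1), (Rmin 1 (1 / (2 * (q + 1)))).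
split. nra. split. apply Rmin_glb_lt. lra. apply Rdiv_lt_0_compat; lra.
intros h tn dt Hh Htn Hdth HTd Uh Useq Hdg Hfp m mp.
assert (h1 : h <= 1) by (pose proof (Rmin_l 1 (1 / (2 * (q + 1)))); lra).
assert (h2 : h <= 1 / (2 * (q + 1))) by (pose proof (Rmin_r 1 (1 / (2 * (q + 1)))); lra).
assert (Hq : q * dt <= 1 / 2).
{ assert (q * dt <= q * (1 / (2 * (q + 1)))) by (apply Rmult_le_compat_l; lra).
  assert (q * (1 / (2 * (q + 1))) <= 1 / 2).
  { unfold Rdiv. rewrite Rmult_1_l. rewrite Rinv_mult.
    assert (0 < / (q + 1)) by (apply Rinv_0_lt_compat; lra).
    assert (q * / (q + 1) <= 1).
    { apply Rmult_le_reg_r with (q + 1). lra. rewrite Rmult_assoc, Rinv_l by lra. lra. }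
    nra. }
  lra. }
assert (Htn' : 0 <= tn <= T) by lra.
assert (Hun : Rabs (u tn) <= Mu) by (apply HMu; auto).
assert (Hf0 : Rabs (f tn (u tn)) <= M0) by (apply HM0; auto).
assert (HE : forall s, tn <= s <= tn + dt -> Rabs (f s (u tn) - f tn (u tn)) <= Mt * dt).
{ intros s hs. eapply Rle_trans. apply HTL; auto; lra.
  apply Rmult_le_compat_l; auto. rewrite Rabs_right; lra. }
pose proof (est_k p tau Hinc Ht0 Htp f Hf Lf HLf0 HLf Lam HLam Cinv HC0 HC M0 Mt HM00 HMt0
              tn dt (u tn) ltac:(lra) Hf0 HE Hq Uh Hdg Useq Hfp K) as HK.
fold q in HK. fold C0v in HK.
eapply Rle_trans. apply (nrm_term p (fun m => Uh m - Useq K m) m mp).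
eapply Rle_trans. exact HK.
rewrite Rpow_mult_distr, pow_add.
assert (dK : dt ^ K <= h ^ K) by (apply pow_incr; lra).
assert (dd : dt * dt <= h ^ 2) by (simpl; nra).
assert (0 <= dt ^ K) by (apply pow_le; lra).
assert (0 <= h ^ K * h ^ 2) by (apply Rmult_le_pos; apply pow_le; lra).
apply Rle_trans with (C0v * q ^ K * (h ^ K * h ^ 2)); [| nra].
replace (q ^ K * dt ^ K * (C0v * (dt * dt))) with ((C0v * q ^ K) * (dt ^ K * (dt * dt))) by ring.
apply Rmult_le_compat_l. nra.
apply Rmult_le_compat; auto. nra.
Qed.
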